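(* Let $i\in K$, let $w$ be a strong minuscule element with $\Lambda_w=\Lambda_i$, and let $w=s_{i_1}\cdots s_{i_r}$ be a reduced expression of $w$ (so that $i_r=i$). For each $1\le p\le r-1$ put $u_p:=\#\{p+1\le a\le r\mid i_a\in\operatorname{adj}_s(i_p)\}$. Then $u_p$ is a nonnegative even integer if $i_p=i$, and $u_p$ is a positive odd integer if $i_p\ne i$.
   Context: Let $\mathfrak g$ be a finite-dimensional simple Lie algebra over $\mathbb C$ of type $\mathrm A_n$, $\mathrm B_n$, $\mathrm C_n$ or $\mathrm D_n$, with index set $I=\{1,\dots,n\}$, simple roots $\alpha_i$, simple coroots $\alpha_i^\vee$, Cartan matrix $a_{ij}=\langle\alpha_j,\alpha_i^\vee\rangle$, fundamental weights $\Lambda_i$, integral weights $P=\bigoplus_i\mathbb Z\Lambda_i$, dominant integral weights $P^+=\sum_i\mathbb Z_{\ge0}\Lambda_i$, Weyl group $W$ generated by simple reflections $s_i$. The Dynkin diagrams are labeled as follows: type $\mathrm A_n$: chain $1-2-\cdots-n$; type $\mathrm B_n$: chain $1-2-\cdots-n$ with a double bond between $1$ and $2$, $\alpha_1$ short and $\alpha_2,\dots,\alpha_n$ long; type $\mathrm C_n$: chain $1-2-\cdots-n$ with a double bond between $1$ and $2$, $\alpha_1$ long and $\alpha_2,\dots,\alpha_n$ short; type $\mathrm D_n$: chain $n-(n-1)-\cdots-3$ with node $3$ joined to both nodes $1$ and $2$. Set $K=I$ in types $\mathrm A_n,\mathrm D_n$, $K=\{1\}$ in type $\mathrm B_n$,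 $K=I\setminus\{1\}$ in type $\mathrm C_n$. For $j\in I$, $\operatorname{adj}_s(j):=\{m\in I\mid a_{jm}=-1\}$. For $\Lambda\in P$, $w\in W$ is $\Lambda$-minuscule if there is a reduced expression $w=s_{i_1}\cdots s_{i_r}$ with $\langle s_{i_{p+1}}\cdots s_{i_r}(\Lambda),\alpha_{i_p}^\vee\rangle=1$ for all $1\le p\le r$ (this then holds for every reduced expression); $w$ is dominant minuscule if it is $\Lambda$-minuscule for some $\Lambda\in P^+$. A dominant minuscule $w$ is strong minuscule if there is a unique $\Lambda\in P^+$, denoted $\Lambda_w$, such that $w$ is $\Lambda$-minuscule. It is known that for a strong minuscule $w$ with $\Lambda_w=\Lambda_i$, every reduced expression of $w$ ends with $s_i$. *)

(* Defs.v *)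
From mathcomp Require Import all_boot all_order all_algebra.
Set Implicit Arguments. Unset Strict Implicit. Unset Printing Implicit Defensive.
Import GRing.Theory Num.Theory.
Local Open Scope ring_scope.

(* Cartan types; node k : 'I_n (0-based) is the paper's label k+1. *)
Inductive ctype := TA | TB | TC | TD.

Definition valid_rank (X : ctype) (n : nat) : bool :=
  match X with
  | TA => (1 <= n)%N
  | TB | TC => (2 <= n)%N
  | TD => (4 <= n)%N
  end.

(* Cartan matrix a_{ij} = <alpha_j, alpha_i^vee>, in the paper's labelling. *)
Definition cartan (X : ctype) (n : nat) (i j : 'I_n) : int :=
  let a := nat_of_ord i in let b := nat_of_ord j in
  if a == b then 2%:Z else
  match X with
  | TA => if (a == b.+1) || (b == a.+1) then (-1)%R else 0
  | TB => (* alpha_1 short, alpha_2..alpha_n long *)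
      if (a == 0%N) && (b == 1%N) then (-2)%R
      else if (a == b.+1) || (b == a.+1) then (-1)%R else 0
  | TC => (* alpha_1 long, alpha_2..alpha_n short *)
      if (a == 1%N) && (b == 0%N) then (-2)%R
      else if (a == b.+1) || (b == a.+1) then (-1)%R else 0
  | TD =>
      if [|| (a == 0%N) && (b == 2%N), (a == 2%N) && (b == 0%N),
             (a == 1%N) && (b == 2%N), (a == 2%N) && (b == 1%N),
             (2 <= a)%N && (b == a.+1) | (2 <= b)%N && (a == b.+1)]
      then (-1)%R else 0
  end.

Definition inK (X : ctype) (n : nat) (i : 'I_n) : bool :=
  match X with
  | TA | TD => true
  | TB => nat_of_ord i == 0%N
  | TC => nat_of_ord i != 0%N
  end.

Definition adjs (X : ctype) (n : nat) (j m : 'I_n) : bool :=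
  cartan X j m == (-1)%R.

(* Integral weights, in the basis of fundamental weights:
   lam k = <lam, alpha_k^vee>. *)
Definition weight (n : nat) := 'I_n -> int.

Definition fund (n : nat) (i : 'I_n) : weight n :=
  fun k => if k == i then 1 else 0.

Definition dominant (n : nat) (lam : weight n) : Prop := forall k, 0 <= lam k.

(* simple reflection: s_j(lam) = lam - <lam,alpha_j^vee> alpha_j,
   and <alpha_j, alpha_k^vee> = a_{kj} *)
Definition sref (X : ctype) (n : nat) (j : 'I_n) (lam : weight n) : weight n :=
  fun k => lam k - lam j * cartan X k j.

(* word [:: i_1; ...; i_r] acts as s_{i_1} ... s_{i_r} *)
Definition wact (X : ctype) (n : nat) (s : seq 'I_n) (lam : weight n) : weight n :=
  foldr (@sref X n) lam s.

(* two words define the same element of W (W acts faithfully on P (x) R) *)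
Definition weq (X : ctype) (n : nat) (s t : seq 'I_n) : Prop :=
  forall lam k, wact X s lam k = wact X t lam k.

Definition reduced (X : ctype) (n : nat) (s : seq 'I_n) : Prop :=
  forall t, weq X s t -> (size s <= size t)%N.

Definition minuscule_word (X : ctype) (n : nat) (lam : weight n) (s : seq 'I_n) : Prop :=
  forall p, (p < size s)%N ->
    forall j0, wact X (drop p.+1 s) lam (nth j0 s p) = 1.

Definition minuscule (X : ctype) (n : nat) (lam : weight n) (s : seq 'I_n) : Prop :=
  exists t, [/\ weq X s t, reduced X t & minuscule_word X lam t].

Definition dominant_minuscule (X : ctype) (n : nat) (s : seq 'I_n) : Prop :=
  exists lam, dominant lam /\ minuscule X lam s.

Definition strong_minuscule (X : ctype) (n : nat) (s : seq 'I_n) : Prop :=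
  dominant_minuscule X s /\
  forall lam mu : weight n, dominant lam -> minuscule X lam s ->
    dominant mu -> minuscule X mu s -> forall k, lam k = mu k.

Definition Lambda_w_is (X : ctype) (n : nat) (s : seq 'I_n) (lam : weight n) : Prop :=
  [/\ strong_minuscule X s, dominant lam & minuscule X lam s].

(* u_p (0-based p, i.e. paper's p+1) for the word s *)
Definition u_count (X : ctype) (n : nat) (s : seq 'I_n) (j0 : 'I_n) (p : nat) : nat :=
  count (adjs X (nth j0 s p)) (drop p.+1 s).

(* Main.v *)
Require Import Defs.
From mathcomp Require Import all_boot all_order all_algebra.
From mathcomp Require Import zify ring lra.
From Stdlib Require Import Classical FunctionalExtensionality.
Set Implicit Arguments. Unset Strict Implicit. Unset Printing Implicit Defensive.
Import GRing.Theory Num.Theory.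
Local Open Scope ring_scope.

Section W.
Variables (X : ctype) (n : nat).
Local Notation word := (seq 'I_n).
Local Notation C := (cartan X).
Local Notation wa := (@wact X n).

Lemma cartan_diag (j : 'I_n) : C j j = 2.
Proof. by rewrite /cartan eqxx. Qed.

Lemma srefE j (l : weight n) k : sref X j l k = l k - l j * C k j.
Proof. by []. Qed.

Lemma sref_inv j (l : weight n) : sref X j (sref X j l) = l.
Proof.
apply: functional_extensionality => k; rewrite !srefE cartan_diag. ring.
Qed.

Lemma wact_cons j (u : word) l : wa (j :: u) l = sref X j (wa u l).
Proof. by []. Qed.

Lemma wact_cat (u v : word) l : wa (u ++ v) l = wa u (wa v l).
Proof. by rewrite /wact foldr_cat. Qed.

Lemma wact_nil (l : weight n) : wa [::] l = l.
Proof. by []. Qed.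

Lemma wact_revK (u : word) l : wa u (wa (rev u) l) = l.
Proof.
elim: u l => [//|j u IH] l.
by rewrite rev_cons -cats1 wact_cat wact_cons IH /= sref_inv.
Qed.

Lemma wact_Krev (u : word) l : wa (rev u) (wa u l) = l.
Proof. by rewrite -{2}(revK u) wact_revK. Qed.

Lemma weqP (s t : word) : weq X s t <-> forall l, wa s l = wa t l.
Proof.
split=> H l; last by move=> k; rewrite H.
by apply: functional_extensionality => k; apply: H.
Qed.

Lemma weq_refl (s : word) : weq X s s. Proof. by []. Qed.
Lemma weq_sym (s t : word) : weq X s t -> weq X t s. Proof. by move=> H l k; rewrite H. Qed.
Lemma weq_trans (s t u : word) : weq X s t -> weq X t u -> weq X s u.
Proof. by move=> H1 H2 l k; rewrite H1 H2. Qed.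

Lemma weq_catl (u s t : word) : weq X s t -> weq X (u ++ s) (u ++ t).
Proof. by move/weqP=> H; apply/weqP=> l; rewrite !wact_cat H. Qed.
Lemma weq_catr (u s t : word) : weq X s t -> weq X (s ++ u) (t ++ u).
Proof. by move/weqP=> H; apply/weqP=> l; rewrite !wact_cat H. Qed.

Lemma weq_rev (s t : word) : weq X s t -> weq X (rev s) (rev t).
Proof.
move/weqP=> H; apply/weqP=> l.
by rewrite -{1}(wact_revK t l) -H wact_Krev.
Qed.

Lemma weq_cancel j (s t : word) : weq X (j :: s) t -> weq X s (j :: t).
Proof.
move/weqP=> H; apply/weqP=> l.
by rewrite wact_cons -H wact_cons sref_inv.
Qed.

Lemma reduced_cons j (u : word) : reduced X (j :: u) -> reduced X u.
Proof.
move=> H t /weqP Ht; have := H (j :: t).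
by rewrite /=; apply => l k; rewrite !wact_cons Ht.
Qed.

Lemma reduced_catl (u v : word) : reduced X (u ++ v) -> reduced X u.
Proof.
move=> H t Ht; have := H (t ++ v) (weq_catr v Ht).
by rewrite !size_cat leq_add2r.
Qed.

Lemma reduced_catr (u v : word) : reduced X (u ++ v) -> reduced X v.
Proof.
move=> H t Ht; have := H (u ++ t) (weq_catl u Ht).
by rewrite !size_cat leq_add2l.
Qed.

Lemma reduced_rev (u : word) : reduced X u -> reduced X (rev u).
Proof.
move=> H t Ht; have : weq X u (rev t) by rewrite -[u]revK; exact: weq_rev.
by move/H; rewrite !size_rev.
Qed.

Lemma not_reduced (u : word) : ~ reduced X u -> exists t, weq X u t /\ (size t < size u)%N.
Proof.
move=> H; apply: NNPP => H2; apply: H => t Ht.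
case: (leqP (size u) (size t)) => // lt; exfalso; apply: H2; by exists t.
Qed.

Lemma ex_min_size (A : Type) (F : A -> Prop) (sz : A -> nat) :
  (exists a, F a) -> exists a, F a /\ forall b, F b -> (sz a <= sz b)%N.
Proof.
case=> a Fa.
have: forall N a, (sz a <= N)%N -> F a -> exists a, F a /\ forall b, F b -> (sz a <= sz b)%N.
  elim=> [|N IH] a0 Ha0 Fa0.
    by exists a0; split => // b _; rewrite leqn0 in Ha0; rewrite (eqP Ha0).
  case: (classic (exists b, F b /\ (sz b < sz a0)%N)) => [[b [Fb lt]]|nb].
    by apply: (IH b) => //; rewrite -ltnS (leq_trans lt).
  exists a0; split => // b Fb; case: (leqP (sz a0) (sz b)) => // lt.
  by exfalso; apply: nb; exists b.
by move/(_ (sz a) a (leqnn _) Fa).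
Qed.

Lemma exists_reduced (u : word) : exists v, weq X u v /\ reduced X v.
Proof.
have [v [Hv Hmin]] := @ex_min_size _ (fun v => weq X u v) (@size _) (ex_intro _ u (weq_refl u)).
exists v; split => // t Ht; apply: Hmin; exact: weq_trans Hv Ht.
Qed.

End W.

Section P.
Variables (X : ctype) (n : nat).
Local Notation word := (seq 'I_n).
Local Notation C := (cartan X).
Local Notation wa := (@wact X n).

Lemma sum_fund (k : 'I_n) (f : 'I_n -> int) : \sum_m fund m k * f m = f k.
Proof.
rewrite (bigD1 k) //= big1 ?addr0; first by rewrite /fund eqxx mul1r.
by move=> m /negPf mk; rewrite /fund eq_sym mk mul0r.
Qed.

Definition Mx (u : word) : 'M[int]_n := \matrix_(k, l) wa u (fund l) k.
Definition Sj (j : 'I_n) : 'M[int]_n := \matrix_(k, l) sref X j (fund l) k.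

Lemma Mx_cons j u : Mx (j :: u) = Sj j *m Mx u.
Proof.
apply/matrixP => k l; rewrite !mxE.
under eq_bigr => m _ do rewrite !mxE srefE mulrBl.
rewrite sumrB sum_fund wact_cons srefE; congr (_ - _).
rewrite /fund; under eq_bigr => m _ do rewrite -mulrA.
rewrite (bigD1 j) //= big1 ?addr0 ?eqxx ?mul1r; first by rewrite mulrC.
by move=> m mj; rewrite eq_sym (negPf mj) mul0r.
Qed.

Lemma Mx_nil : Mx [::] = 1%:M.
Proof. by apply/matrixP => k l; rewrite !mxE /fund wact_nil; case: (k == l). Qed.

Lemma det_Sj j : \det (Sj j) = -1.
Proof.
rewrite (expand_det_row _ j).
rewrite (bigD1 j) //= big1 ?addr0.
  rewrite mxE srefE cartan_diag /fund eqxx /cofactor addnn -signr_odd odd_double expr0 mul1r.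
  have -> : row' j (col' j (Sj j)) = 1%:M.
    apply/matrixP => a b; rewrite !mxE srefE /fund (inj_eq lift_inj).
    rewrite (negPf (neq_lift j b)) mul0r subr0.
    by case: (a == b).
  by rewrite det1; ring.
by move=> l lj; rewrite mxE srefE /fund eq_sym (negPf lj) mul0r subr0 mul0r.
Qed.

Lemma det_Mx u : \det (Mx u) = (-1) ^+ size u.
Proof.
elim: u => [|j u IH]; first by rewrite Mx_nil det1.
by rewrite Mx_cons det_mulmx det_Sj IH /= exprS.
Qed.

Lemma weq_odd (s t : word) : weq X s t -> odd (size s) = odd (size t).
Proof.
move=> H; have : Mx s = Mx t by apply/matrixP => k l; rewrite !mxE H.
move/(congr1 determinant); rewrite !det_Mx -signr_odd -[in RHS]signr_odd.
case: (odd _); case: (odd _); rewrite ?expr1 ?expr0 // => H'; lia.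
Qed.
End P.

Lemma cartan_pair X n (j k : 'I_n) : j != k ->
  [\/ cartan X j k = 0 /\ cartan X k j = 0, cartan X j k = -1 /\ cartan X k j = -1,
      cartan X j k = -1 /\ cartan X k j = -2 | cartan X j k = -2 /\ cartan X k j = -1].
Proof.
move=> jk; rewrite /cartan; cbv zeta.
have : (nat_of_ord j != nat_of_ord k) by [].
move: (nat_of_ord j) (nat_of_ord k) => a b nab.

case: X => /=; repeat case: ifP; intros;
  solve [exfalso; lia | apply: Or41; split; reflexivity | apply: Or42; split; reflexivity
        | apply: Or43; split; reflexivity | apply: Or44; split; reflexivity].
Qed.

Section D.
Variables (X : ctype) (n : nat).
Local Notation word := (seq 'I_n).
Local Notation C := (cartan X).
Local Notation wa := (@wact X n).

Fixpoint alt (a b : 'I_n) (k : nat) : word :=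
  if k is k'.+1 then a :: alt b a k' else [::].

Lemma braid_pos (s s' : 'I_n) : s != s' ->
  exists m, (0 < m)%N /\ weq X (alt s' s m) (alt s s' m) /\
    forall k, (k < m)%N -> forall mu : weight n, 0 <= mu s -> 0 <= mu s' ->
      0 <= wa (alt s' s k) mu s.
Proof.
move=> ss; case: (cartan_pair X ss) => [[Ha Hb]|[Ha Hb]|[Ha Hb]|[Ha Hb]].
- exists 2%N; split => //; split.
    by move=> l k /=; rewrite !srefE ?cartan_diag Ha Hb; ring.
  move=> k km mu h1 h2; do 2?[case: k km => [|k] km] => //=; rewrite ?srefE ?cartan_diag ?Ha ?Hb; lia.
- exists 3%N; split => //; split.
    by move=> l k /=; rewrite !srefE ?cartan_diag Ha Hb; ring.
  move=> k km mu h1 h2; do 3?[case: k km => [|k] km] => //=; rewrite ?srefE ?cartan_diag ?Ha ?Hb; lia.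
- exists 4%N; split => //; split.
    by move=> l k /=; rewrite !srefE ?cartan_diag Ha Hb; ring.
  move=> k km mu h1 h2; do 4?[case: k km => [|k] km] => //=; rewrite ?srefE ?cartan_diag ?Ha ?Hb; lia.
- exists 4%N; split => //; split.
    by move=> l k /=; rewrite !srefE ?cartan_diag Ha Hb; ring.
  move=> k km mu h1 h2; do 4?[case: k km => [|k] km] => //=; rewrite ?srefE ?cartan_diag ?Ha ?Hb; lia.
Qed.

Lemma weq_cancel2 a (y : word) : weq X (a :: a :: y) y.
Proof. by apply/weqP => l; rewrite !wact_cons sref_inv. Qed.

Lemma alt_of (P : pred 'I_n) (x : word) a b : a != b ->
  all (fun z => (z == a) || (z == b)) x -> all P x ->
  (forall y, all P y -> weq X y x -> (size x <= size y)%N) ->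
  (forall x', x <> b :: x') -> x = alt a b (size x).
Proof.
elim: x a b => [//|z x IH] a b ab /= /andP[zab xab] /andP[Pz Px] Hmin Hh.
have za : z = a.
  case/orP: zab => /eqP // zb; by move: (Hh x); rewrite zb.
subst z; congr cons; apply: IH.
- by rewrite eq_sym.
- by apply: sub_all xab => z; rewrite orbC.
- exact Px.
- move=> y Py Hy; have := Hmin (a :: y); rewrite /= Pz Py => /(_ isT).
  have : weq X (a :: y) (a :: x) by move/weqP: Hy => Hy; apply/weqP => l; rewrite !wact_cons Hy.
  by move=> H /(_ H).
- move=> x' Hx; subst x; have := Hmin x'.
  rewrite /= in Px; case/andP: Px => _ Px'.
  move=> /(_ Px' (weq_sym (weq_cancel2 a x'))) /=; lia.
Qed.

Lemma size_alt a b k : size (alt a b k) = k.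
Proof. by elim: k a b => //= k IH a b; rewrite IH. Qed.

Lemma take_alt a b m k : (m <= k)%N -> take m (alt a b k) = alt a b m.
Proof.
elim: m a b k => [|m IH] a b [|k] //= mk; by rewrite IH.
Qed.

Lemma all_alt (P : pred 'I_n) a b k : P a -> P b -> all P (alt a b k).
Proof. by elim: k a b => //= k IH a b Pa Pb; rewrite Pa IH. Qed.

Lemma dihedral (s s' : 'I_n) (x : word) (mu : weight n) : s != s' ->
  all (fun z => (z == s) || (z == s')) x ->
  (forall y, all (fun z => (z == s) || (z == s')) y -> weq X y (s :: x) -> (size x < size y)%N) ->
  (forall y, all (fun z => (z == s) || (z == s')) y -> weq X y x -> (size x <= size y)%N) ->
  0 <= mu s -> 0 <= mu s' -> 0 <= wa x mu s.
Proof.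
move=> ss Px H1 H2 h1 h2.
set P := (fun z => (z == s) || (z == s')) in Px H1 H2.
have Hx : x = alt s' s (size x).
  apply: (@alt_of P) => //.
  - by rewrite eq_sym.
  - by apply: sub_all Px => z; rewrite /P orbC.
  - move=> x' Hx; subst x; have := H1 x'.
    rewrite /= in Px; case/andP: Px => _ Px'.
    move=> /(_ Px' (weq_sym (weq_cancel2 s x'))) /=; lia.
have [m [m0 [Hbr Hpos]]] := braid_pos ss.
rewrite Hx; apply: Hpos => //.
case: (ltnP (size x) m) => // km; exfalso.
pose y := alt s' s m.-1 ++ drop m x.
have HPy : all P y.
  rewrite all_cat all_alt ?/P ?eqxx ?orbT //=.
  by move: Px; rewrite -{1}(cat_take_drop m x) all_cat => /andP[].
have Hy : weq X y (s :: x).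
  apply/weqP => l; rewrite -{1}(cat_take_drop m x) /y !wact_cat wact_cons wact_cat.
  rewrite Hx take_alt // -Hx.
  move/weqP: Hbr => Hbr; rewrite Hbr.
  clear HPy; case: m m0 {Hbr km y} => [//|m] _ /=. by rewrite sref_inv.
have := H1 y HPy Hy.
rewrite /y size_cat size_alt size_drop.
clear HPy Hy; case: m m0 km {Hbr y} => [//|m] _ /= km; lia.
Qed.
End D.

Section E.
Variables (X : ctype) (n : nat).
Local Notation word := (seq 'I_n).
Local Notation C := (cartan X).
Local Notation wa := (@wact X n).

Lemma Pos_aux N : forall (u : word) m, (size u <= N)%N -> reduced X (m :: u) ->
  forall l, dominant l -> 0 <= wa u l m.
Proof.
elim: N => [|N IH] u s.
  by case: u => [|//] _ _ l Hl; exact: Hl.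
case: u => [|s' u]; first by move=> _ _ l Hl; exact: Hl.
move=> Hs Hr l Hl.
have ss : s != s'.
  apply/negP => /eqP e; subst s'.
  by have := Hr u (weq_cancel2 X s u) => /=; lia.
have Hu := reduced_cons Hr.
set P := (fun z : 'I_n => (z == s) || (z == s')).
pose F v := exists x, [/\ all P x, weq X (x ++ v) (s' :: u) & (size x + size v = size (s' :: u))%N].
have Fu : F u by exists [:: s']; split => //=; rewrite /P eqxx orbT.
have [v [[x [Px Hxv Hsz]] Hmin]] := @ex_min_size _ F (@size _) (ex_intro _ u Fu).
have Hred : forall j, P j -> reduced X (j :: v).
  move=> j Pj; apply: NNPP => nr; have [t [Ht Hts]] := not_reduced nr.
  have ho := weq_odd Ht.
  have tv : (size t < size v)%N.
    rewrite /= in Hts ho; case: (ltngtP (size t) (size v)) => //; first lia.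
    by move=> e; rewrite e in ho; case: (odd _) ho.
  have Hv := weq_cancel Ht.
  have Hw : weq X ((x ++ [:: j]) ++ t) (s' :: u).
    rewrite -catA cat1s; apply: weq_trans Hxv; apply: weq_catl; exact: weq_sym Hv.
  have := Hu _ (weq_sym Hw); rewrite !size_cat /= => Hge.
  have Ft : F t.
    exists (x ++ [:: j]); split => //.
      by rewrite all_cat Px /= Pj.
    rewrite size_cat /=; rewrite /= in Hsz Hge; lia.
  by have := Hmin t Ft; lia.
have Hvs : (size v <= size u)%N by have := Hmin u Fu.
have Ps : P s by rewrite /P eqxx.
have Ps' : P s' by rewrite /P eqxx orbT.
have h1 := IH v s ltac:(rewrite /= in Hs; lia) (Hred s Ps) l Hl.
have h2 := IH v s' ltac:(rewrite /= in Hs; lia) (Hred s' Ps') l Hl.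
have Exv : forall l0, wa (x ++ v) l0 = wa (s' :: u) l0 by apply/weqP.
rewrite -Exv wact_cat.
apply: (dihedral ss Px) => // y Py Hy.
- apply: contraT; rewrite -leqNgt => yx.
  have Hw : weq X (s :: s' :: u) (y ++ v).
    move/weqP: Hy => Hy.
    apply/weqP => l'; rewrite wact_cat Hy [wa (s :: x) _]wact_cons [wa (s :: s' :: u) _]wact_cons.
    by rewrite -wact_cat Exv.
  have := Hr _ Hw; rewrite size_cat /=; rewrite /= in Hsz => H; exfalso; move: yx H; set k := size y; set k2 := size x; set k3 := size v; lia.
- have Hw : weq X (s' :: u) (y ++ v).
    apply: weq_trans (weq_sym Hxv) _; apply: weq_catr; exact: weq_sym.
  by have := Hu _ Hw; rewrite size_cat /=; rewrite /= in Hsz; lia.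
Qed.

Lemma Pos (u : word) m : reduced X (m :: u) -> forall l, dominant l -> 0 <= wa u l m.
Proof. by move=> H; apply: (@Pos_aux (size u)). Qed.

End E.

Section F.
Variables (X : ctype) (n : nat).
Local Notation word := (seq 'I_n).
Local Notation C := (cartan X).
Local Notation wa := (@wact X n).

Lemma wact_lin (u : word) (l : weight n) k :
  wa u l k = \sum_m l m * wa u (fund m) k.
Proof.
elim: u k => [|j u IH] k.
  rewrite /wact /= (bigD1 k) //= big1 ?addr0 /fund ?eqxx ?mulr1 //.
  by move=> m mk; rewrite eq_sym (negPf mk) mulr0.
rewrite wact_cons srefE IH (IH j) big_distrl -sumrB.
by apply: eq_bigr => m _; rewrite wact_cons srefE mulrBr mulrA.
Qed.

Lemma dom_fund (k : 'I_n) : dominant (fund k).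
Proof. by move=> j; rewrite /fund; case: (j == k). Qed.

Definition pos (f : weight n -> int) := forall l, dominant l -> 0 <= f l.
Definition neg (f : weight n -> int) := forall l, dominant l -> f l <= 0.

Lemma cv_not_both (v : word) m : ~ (pos (fun l => wa v l m) /\ neg (fun l => wa v l m)).
Proof.
case=> hp hn.
have H0 : forall k, wa v (fund k) m = 0.
  move=> k; have := hp _ (dom_fund k); have := hn _ (dom_fund k); lia.
have := wact_lin v (wa (rev v) (fund m)) m.
rewrite wact_revK big1 /fund ?eqxx // => k _; by rewrite H0 mulr0.
Qed.

Lemma cv_coherent (v : word) m : pos (fun l => wa v l m) \/ neg (fun l => wa v l m).
Proof.
have [v' [Hv Hr]] := exists_reduced X v.
have E : forall l, wa v l = wa v' l by apply/weqP.
case: (classic (reduced X (m :: v'))) => Hm.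
  by left => l Hl; rewrite E; apply: Pos.
right; have [t [Ht Hts]] := not_reduced Hm.
have ho := weq_odd Ht.
have tv : (size t < size v')%N.
  rewrite /= in Hts ho; case: (ltngtP (size t) (size v')) => //; first lia.
  by move=> e; rewrite e in ho; case: (odd _) ho.
have Hv2 := weq_cancel Ht.
have Hmt : reduced X (m :: t).
  move=> t' Ht'; have := Hr t' (weq_trans Hv2 Ht'); rewrite /=; lia.
move/weqP: Hv2 => Hv2.
move=> l Hl; rewrite E Hv2 wact_cons srefE cartan_diag.
have := Pos Hmt Hl; lia.
Qed.

Lemma sref_fund (j k : 'I_n) : k != j -> sref X j (fund k) = fund k.
Proof.
move=> kj; apply: functional_extensionality => l.
by rewrite srefE [fund k j]/fund ifN ?mul0r ?subr0 // eq_sym.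
Qed.

Lemma cv_simple (v : word) m j :
  pos (fun l => wa v l m) -> neg (fun l => wa v (sref X j l) m) ->
  forall l, wa v l m = l j.
Proof.
move=> hp hn.
have H0 : forall k, k != j -> wa v (fund k) m = 0.
  move=> k kj; have := hp _ (dom_fund k); have := hn _ (dom_fund k).
  rewrite sref_fund //; lia.
have Hl : forall l, wa v l m = l j * wa v (fund j) m.
  move=> l; rewrite wact_lin (bigD1 j) //= big1 ?addr0 // => k kj.
  by rewrite H0 ?mulr0.
have := Hl (wa (rev v) (fund m)); rewrite wact_revK /fund eqxx.
have := hp _ (dom_fund j).
set a := wa v (fund j) m; set b := wa (rev v) (fund m) j => ha hab.
have b0 : 0 < b by nia. have a1 : a = 1 by nia.
by move=> l; rewrite Hl -/a a1 mulr1.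
Qed.

End F.

Lemma discrete_ivt (Q : nat -> Prop) N : Q N -> ~ Q 0%N ->
  exists q, [/\ (q < N)%N, Q q.+1 & ~ Q q].
Proof.
elim: N => [//|N IH] HN H0.
case: (classic (Q N)) => h.
  by have [q [q1 q2 q3]] := IH h H0; exists q; split => //; lia.
by exists N; split.
Qed.

Section G.
Variables (X : ctype) (n : nat).
Local Notation word := (seq 'I_n).
Local Notation C := (cartan X).
Local Notation wa := (@wact X n).

Lemma inversion (s t : word) (j0 : 'I_n) p :
  reduced X s -> reduced X t -> weq X s t -> (p < size s)%N ->
  exists q, (q < size t)%N /\
    forall l, wa (drop p.+1 s) l (nth j0 s p) = wa (drop q.+1 t) l (nth j0 t q).
Proof.
move=> Hs Ht Hst ps.
set j := nth j0 s p.
have Hdp : drop p s = j :: drop p.+1 s by rewrite (drop_nth j0).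
have Hbeta : pos (fun l => wa (drop p.+1 s) l j).
  move=> l Hl; apply: Pos => //; rewrite -Hdp.
  by apply: (@reduced_catr _ _ (take p s)); rewrite cat_take_drop.
pose g q := fun l => wa (drop p.+1 s ++ rev (drop q t)) l j.
have gE : forall q l, g q l = wa (drop p.+1 s) (wa (rev (drop q t)) l) j.
  by move=> q l; rewrite /g wact_cat.
pose Q q := pos (g q).
have QN : Q (size t).
  by move=> l Hl; rewrite gE drop_size; exact: Hbeta.
have Q0 : ~ Q 0%N.
  move=> hq; apply: (@cv_not_both X n (drop p.+1 s ++ rev (drop 0 t)) j); split => //.
  move=> l Hl; rewrite -/(g 0%N l) gE drop0.
  have -> : wa (rev t) l = wa (rev s) l.
    by move/weqP: (weq_rev (weq_sym Hst)) => ->.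
  have Er : rev s = rev (drop p.+1 s) ++ rev (take p.+1 s) by rewrite -rev_cat cat_take_drop.
  rewrite Er wact_cat wact_revK.
  rewrite (take_nth j0) // rev_rcons wact_cons srefE cartan_diag -/j.
  have Hr : reduced X (j :: rev (take p s)).
    rewrite -rev_rcons -(take_nth j0) //; apply: reduced_rev.
    by apply: (@reduced_catl _ _ _ (drop p.+1 s)); rewrite cat_take_drop.
  have := Pos Hr Hl; lia.
have [q [qt Qq1 Qq]] := discrete_ivt QN Q0.
exists q; split => //.
have Hn : neg (g q).
  by case: (cv_coherent X (drop p.+1 s ++ rev (drop q t)) j).
have Hdq : drop q t = nth j0 t q :: drop q.+1 t by rewrite (drop_nth j0).
have Hsimple := @cv_simple X n (drop p.+1 s ++ rev (drop q.+1 t)) j (nth j0 t q) Qq1.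
have E : forall l, wa (drop p.+1 s ++ rev (drop q.+1 t)) l j = l (nth j0 t q).
  apply: Hsimple => l' Hl'; have := Hn l' Hl'.
  by rewrite /g Hdq rev_cons -cats1 catA wact_cat.
move=> l.
by have := E (wa (drop q.+1 t) l); rewrite wact_cat wact_Krev.
Qed.

End G.

Section H.
Variables (X : ctype) (n : nat).
Local Notation word := (seq 'I_n).
Local Notation C := (cartan X).
Local Notation wa := (@wact X n).

Lemma mw_drop (l : weight n) (u : word) k :
  minuscule_word X l u -> minuscule_word X l (drop k u).
Proof.
move=> H p; rewrite size_drop => pk j0.
rewrite drop_drop nth_drop.
have -> : (p.+1 + k = (k + p).+1)%N by lia.
apply: H; lia.
Qed.

Lemma mw_formula (l : weight n) (u : word) :
  minuscule_word X l u -> forall k, wa u l k = l k - \sum_(x <- u) C k x.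
Proof.
elim: u => [|x u IH] H k; first by rewrite big_nil subr0.
have H1 : wa u l x = 1 by have := H 0%N isT x; rewrite /= drop0.
have Hu : minuscule_word X l u by have := @mw_drop l _ 1 H; rewrite drop1.
rewrite wact_cons srefE IH // H1 mul1r big_cons; ring.
Qed.

Lemma sum_decomp (j : 'I_n) (r : word) :
  \sum_(x <- r) C j x =
  2 * (count (pred1 j) r)%:Z - (count (adjs X j) r)%:Z
    - 2 * (count (fun x => C j x == -2) r)%:Z.
Proof.
elim: r => [|x r IH]; first by rewrite big_nil.
rewrite big_cons IH /=.
have Hx : C j x = 2 * (x == j)%:Z - (adjs X j x)%:Z - 2 * (C j x == -2)%:Z.
  case: (eqVneq x j) => [->|xj].
    by rewrite /adjs cartan_diag.
  have jx : j != x by rewrite eq_sym.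
  by case: (cartan_pair X jx) => [[E _]|[E _]|[E _]|[E _]]; rewrite /adjs E.
rewrite {1}Hx.
rewrite !PoszD; ring.
Qed.

End H.

Local Close Scope ring_scope.

Theorem lemma6p5 (X : ctype) (n : nat) (i : 'I_n) (s : seq 'I_n) :
  valid_rank X n -> inK X i ->
  Lambda_w_is X s (fund i) -> reduced X s ->
  forall p : nat, (p < (size s).-1)%N ->
    if nth i s p == i then ~~ odd (u_count X s i p)
    else (0 < u_count X s i p)%N && odd (u_count X s i p).
Proof.
move=> _ _ [_ _ [t [Hst Ht Hmt]]] Hs p ps.
have mw : minuscule_word X (fund i) s.
  move=> q qs j0.
  have [q' [q't ->]] := inversion j0 Hs Ht Hst qs.
  exact: Hmt.
have ps' : (p < size s)%N by lia.
have := mw p ps' i.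
rewrite -[drop p.+1 s]/(drop p.+1 s) (mw_formula (mw_drop (k:=p.+1) mw)) sum_decomp.
rewrite /u_count; set j := nth i s p.
set u := count (adjs X j) (drop p.+1 s).
set c1 := count (pred1 j) (drop p.+1 s).
set c2 := count _ (drop p.+1 s).
rewrite /fund.
case: (j == i) => H.
  have Hn : (u = 2 * c1 - 2 * c2 /\ 2 * c2 <= 2 * c1)%N by lia.
  by case: Hn => -> _; rewrite -mulnBr oddM.
have Hn : (u = (c1 - c2).*2.+1)%N by rewrite -!muln2; lia.
by rewrite Hn /= odd_double.
Qed.
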